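(* For every $\delta\in(0,1]$ there is a constant $c_\delta>0$ such that the following holds. Let $A=\{a_1<a_2<\dots<a_k\}\subset\mathbb{R}$ and let $D=\{a_{i+1}-a_i: 1\le i\le k-1\}$ be its set of consecutive differences. If $|D|\ge \delta|A|$, then for every finite nonempty $B\subset\mathbb{R}$, \[ |A+B|\ge c_\delta\,|A|\,|B|^{1/2}. \]
   Context: For finite $A,B\subset\mathbb{R}$, $A+B=\{a+b: a\in A, b\in B\}$. *)

(* Defs.v *)
From Stdlib Require Import Reals List Sorted.
Import ListNotations.
Open Scope R_scope.

Definition card (l : list R) : nat := length (nodup Req_EM_T l).

Fixpoint consec_diffs (l : list R) : list R :=
  match l with
  | x :: ((y :: _) as t) => (y - x) :: consec_diffs t
  | _ => []
  end.

Definition sumset (A B : list R) : list R :=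
  flat_map (fun a => map (fun b => a + b) B) A.

(* Main.v *)
Require Import Defs.
From Stdlib Require Import Reals List Sorted Lia Lra.
Import ListNotations.
Open Scope R_scope.

Lemma inj_count {X Y : Type} (f : X -> Y) (l : list X) (l' : list Y) :
  NoDup l -> (forall a b, In a l -> In b l -> f a = f b -> a = b) ->
  (forall a, In a l -> In (f a) l') -> (length l <= length l')%nat.
Proof.
  intros Hn Hi Hm.
  rewrite <- (length_map f l).
  apply NoDup_incl_length.
  - apply NoDup_map_NoDup_ForallPairs; auto.
  - intros y Hy. apply in_map_iff in Hy as [x [<- Hx]]. auto.
Qed.

Lemma NoDup_prod {X Y : Type} (l : list X) (l' : list Y) :
  NoDup l -> NoDup l' -> NoDup (list_prod l l').
Proof.
  intros H H'. induction H as [|a l Ha Hl IH]; simpl. constructor.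
  apply NoDup_app; auto.
  - apply NoDup_map_NoDup_ForallPairs; auto. intros u v _ _ E. congruence.
  - intros [u v] Hu Hv. apply in_map_iff in Hu as [w [E _]]. inversion E; subst.
    apply in_prod_iff in Hv as [Hv _]. tauto.
Qed.

Lemma filter_mono {X : Type} (f g : X -> bool) (l : list X) :
  (forall a, f a = true -> g a = true) -> (length (filter f l) <= length (filter g l))%nat.
Proof.
  intros H. induction l as [|a l IH]; simpl. lia.
  destruct (f a) eqn:E1. rewrite (H a E1). simpl. lia.
  destruct (g a); simpl; lia.
Qed.

Lemma filter_strict {X : Type} (f g : X -> bool) (l : list X) y :
  (forall a, f a = true -> g a = true) -> In y l -> f y = false -> g y = true ->
  (length (filter f l) < length (filter g l))%nat.
Proof.
  intros H Hy Hf Hg. induction l as [|a l IH]; simpl. destruct Hy.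
  destruct Hy as [<-|Hy].
  - rewrite Hf, Hg. simpl. pose proof (filter_mono f g l H). lia.
  - specialize (IH Hy). destruct (f a) eqn:E1. rewrite (H a E1). simpl. lia.
    destruct (g a); simpl; lia.
Qed.

Fixpoint cpairs (l : list R) : list (R*R) :=
  match l with
  | x :: ((y :: _) as t) => (x, y) :: cpairs t
  | _ => []
  end.

Lemma cd_map l : consec_diffs l = map (fun pq => snd pq - fst pq) (cpairs l).
Proof.
  induction l as [|x t IH]; simpl. reflexivity.
  destruct t as [|y t']. reflexivity. simpl in *. rewrite IH. reflexivity.
Qed.

Lemma cpairs_prop l p q : StronglySorted Rlt l -> In (p,q) (cpairs l) ->
  In p l /\ In q l /\ p < q /\ forall a, In a l -> a <= p \/ q <= a.
Proof.
  induction l as [|x t IH]; intros HS Hin. destruct Hin.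
  inversion HS as [|? ? HSt Hall]; subst.
  destruct t as [|y t']. destruct Hin.
  destruct Hin as [E|Hin].
  - inversion E; subst. inversion Hall; subst.
    split; [left; auto|split; [right; left; auto|split; auto]].
    intros a [<-|[<-|Ha]]. left; lra. right; lra.
    right. inversion HSt; subst. apply Rlt_le. rewrite Forall_forall in *. auto.
  - destruct (IH HSt Hin) as (H1 & H2 & H3 & H4).
    split; [right; auto|split; [right; auto|split; auto]].
    intros a [<-|Ha]; auto. left. rewrite Forall_forall in Hall. apply Rlt_le; auto.
Qed.

Definition pick (A : list R) (d : R) : R*R :=
  match find (fun pq => if Req_EM_T (snd pq - fst pq) d then true else false) (cpairs A) with
  | Some pq => pq | None => (0,0) end.

Lemma pick_spec A d : In d (consec_diffs A) ->
  In (pick A d) (cpairs A) /\ snd (pick A d) - fst (pick A d) = d.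
Proof.
  intros H. unfold pick.
  destruct (find _ _) as [pq|] eqn:E.
  - apply find_some in E as [E1 E2]. split; auto.
    destruct (Req_EM_T _ _); congruence.
  - rewrite cd_map in H. apply in_map_iff in H as [pq [E1 E2]].
    pose proof (find_none _ _ E pq E2). simpl in H.
    destruct (Req_EM_T _ _); congruence.
Qed.
Definition cnt (L : list R) (x : R) : nat :=
  length (filter (fun s => if Rle_dec s x then true else false) L).

Lemma cnt_mono L x y : x <= y -> (cnt L x <= cnt L y)%nat.
Proof.
  intros H. apply filter_mono. intros a. do 2 destruct (Rle_dec _ _); auto. lra.
Qed.

Lemma cnt_strict L x y : x < y -> In y L -> (cnt L x < cnt L y)%nat.
Proof.
  intros H Hy. apply (filter_strict _ _ _ y); auto.
  intros a. do 2 destruct (Rle_dec _ _); auto. lra.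
  destruct (Rle_dec _ _); auto. lra. destruct (Rle_dec _ _); auto. lra.
Qed.

Lemma cnt_pos L x : In x L -> (1 <= cnt L x)%nat.
Proof.
  intros H. unfold cnt.
  assert (In x (filter (fun s => if Rle_dec s x then true else false) L)).
  { apply filter_In. split; auto. destruct (Rle_dec _ _); auto. lra. }
  destruct (filter _ _); simpl in *. destruct H0. lia.
Qed.

Lemma cnt_le L x : (cnt L x <= length L)%nat.
Proof. apply filter_length_le. Qed.

Lemma cnt_inj L x y : In x L -> In y L -> cnt L x = cnt L y -> x = y.
Proof.
  intros Hx Hy E. destruct (Rtotal_order x y) as [H|[H|H]]; auto.
  pose proof (cnt_strict L x y H Hy). lia.
  pose proof (cnt_strict L y x H Hx). lia.
Qed.

Lemma in_sumset A B p b : In p A -> In b B -> In (p + b) (nodup Req_EM_T (sumset A B)).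
Proof.
  intros Hp Hb. apply nodup_In. unfold sumset. apply in_flat_map. exists p. split; auto.
  apply in_map_iff. exists b. split; auto.
Qed.
Lemma count_main (A B : list R) :
  Sorted Rlt A -> NoDup B -> (1 <= length B)%nat ->
  (length B * card (consec_diffs A) <= 4 * card (sumset A B) * Nat.sqrt (length B))%nat.
Proof.
  intros HSo HB Hm.
  assert (HS : StronglySorted Rlt A).
  { apply Sorted_StronglySorted; auto. intros a b c; lra. }
  set (Sl := nodup Req_EM_T (sumset A B)).
  set (Dl := nodup Req_EM_T (consec_diffs A)).
  set (m := length B).
  set (n := card (sumset A B)).
  assert (Hn : n = length Sl) by reflexivity.
  set (xx := fun it : R * R => fst (pick A (snd it)) + fst it).
  set (yy := fun it : R * R => snd (pick A (snd it)) + fst it).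
  set (w := fun it => (cnt Sl (yy it) - cnt Sl (xx it))%nat).
  set (dom := list_prod B Dl).
  assert (Hdom : forall it, In it dom ->
     In (fst it) B /\ In (pick A (snd it)) (cpairs A) /\
     snd (pick A (snd it)) - fst (pick A (snd it)) = snd it /\
     In (xx it) Sl /\ In (yy it) Sl /\ xx it < yy it /\
     (1 <= cnt Sl (xx it))%nat /\ (cnt Sl (xx it) < cnt Sl (yy it))%nat /\
     (cnt Sl (yy it) <= n)%nat).
  { intros [b dd] Hit. apply in_prod_iff in Hit as [Hb Hd]. simpl.
    unfold Dl in Hd. apply nodup_In in Hd.
    destruct (pick_spec A dd Hd) as [Hp Hdd].
    destruct (pick A dd) as [p q] eqn:Epq. simpl in *.
    destruct (cpairs_prop A p q HS Hp) as (H1 & H2 & H3 & H4).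
    unfold xx, yy; simpl; rewrite Epq; simpl.
    assert (In (p+b) Sl) by (apply in_sumset; auto).
    assert (In (q+b) Sl) by (apply in_sumset; auto).
    repeat split; auto; try lra.
    apply cnt_pos; auto. apply cnt_strict; auto; lra. rewrite Hn. apply cnt_le. }
  set (t := S (Nat.sqrt m)).
  set (small := filter (fun it => Nat.leb (w it) t) dom).
  set (large := filter (fun it => negb (Nat.leb (w it) t)) dom).
  assert (Hsum : (length small + length large = m * length Dl)%nat).
  { unfold small, large. rewrite filter_length. unfold dom. apply length_prod. }
  assert (HND : NoDup dom).
  { apply NoDup_prod; auto. apply NoDup_nodup. }
  assert (Hsmall : (length small <= n * t)%nat).
  { replace (n * t)%nat with (length (list_prod (seq 1 n) (seq 1 t)))
      by (rewrite length_prod, !length_seq; auto).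
    apply (inj_count (fun it => (cnt Sl (xx it), w it))).
    - apply NoDup_filter; auto.
    - intros [b1 d1] [b2 d2] H1 H2 E.
      apply filter_In in H1 as [H1 _]. apply filter_In in H2 as [H2 _].
      pose proof (Hdom _ H1) as (Hb1 & Hp1 & Hd1 & Hx1 & Hy1 & Hxy1 & Hc1 & Hcc1 & _).
      pose proof (Hdom _ H2) as (Hb2 & Hp2 & Hd2 & Hx2 & Hy2 & Hxy2 & Hc2 & Hcc2 & _).
      inversion E as [[E1 E2]].
      assert (Ex := cnt_inj _ _ _ Hx1 Hx2 E1).
      assert (Ey : yy (b1,d1) = yy (b2,d2)).
      { apply (cnt_inj Sl); auto. unfold w in E2. lia. }
      simpl in *. unfold xx, yy in Ex, Ey; simpl in Ex, Ey.
      assert (d1 = d2) by lra. subst d2. f_equal. lra.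
    - intros it Hit. apply filter_In in Hit as [Hit Hle].
      apply Nat.leb_le in Hle.
      pose proof (Hdom _ Hit) as (_ & _ & _ & _ & _ & _ & Hc & Hcc & Hcn).
      apply in_prod; apply in_seq; unfold w in *; lia. }
  assert (Hlarge : (length large * t <= m * n)%nat).
  { replace (length large * t)%nat with (length (list_prod large (seq 1 t)))
      by (rewrite length_prod, length_seq; auto).
    replace (m * n)%nat with (length (list_prod B (seq 1 n)))
      by (rewrite length_prod, length_seq; auto).
    apply (inj_count (fun itj => (fst (fst itj), cnt Sl (xx (fst itj)) + snd itj)%nat)).
    - apply NoDup_prod. apply NoDup_filter; auto. apply seq_NoDup.
    - intros [[b1 d1] j1] [[b2 d2] j2] H1 H2 E.
      apply in_prod_iff in H1 as [H1 Hj1]. apply in_prod_iff in H2 as [H2 Hj2].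
      apply in_seq in Hj1. apply in_seq in Hj2.
      apply filter_In in H1 as [H1 Hl1]. apply filter_In in H2 as [H2 Hl2].
      apply Bool.negb_true_iff, Nat.leb_gt in Hl1.
      apply Bool.negb_true_iff, Nat.leb_gt in Hl2.
      pose proof (Hdom _ H1) as (Hb1 & Hp1 & Hd1 & Hx1 & Hy1 & Hxy1 & Hc1 & Hcc1 & _).
      pose proof (Hdom _ H2) as (Hb2 & Hp2 & Hd2 & Hx2 & Hy2 & Hxy2 & Hc2 & Hcc2 & _).
      simpl in *. injection E as Eb Ek. subst b2.
      unfold w in Hl1, Hl2.
      destruct (pick A d1) as [p1 q1] eqn:P1.
      destruct (pick A d2) as [p2 q2] eqn:P2.
      unfold xx, yy in *; simpl in *. rewrite P1, P2 in *. simpl in *.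
      destruct (cpairs_prop A p1 q1 HS Hp1) as (Ha1 & Ha2 & Ha3 & Ha4).
      destruct (cpairs_prop A p2 q2 HS Hp2) as (Hb1' & Hb2' & Hb3 & Hb4).
      destruct (Rtotal_order p1 p2) as [L|[L|L]].
      + destruct (Ha4 p2 Hb1') as [X|X]; [lra|].
        pose proof (cnt_mono Sl (q1 + b1) (p2 + b1) ltac:(lra)). lia.
      + subst p2.
        assert (q1 = q2).
        { destruct (Ha4 q2 Hb2') as [X|X]; [lra|].
          destruct (Hb4 q1 Ha2) as [Y|Y]; lra. }
        subst q2. assert (d1 = d2) by lra. subst d2.
        f_equal; [f_equal; lra | lia].
        
      + destruct (Hb4 p1 Ha1) as [X|X]; [lra|].
        pose proof (cnt_mono Sl (q2 + b1) (p1 + b1) ltac:(lra)). lia.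
    - intros [it j] Hit. apply in_prod_iff in Hit as [Hit Hj]. apply in_seq in Hj.
      apply filter_In in Hit as [Hit Hl].
      apply Bool.negb_true_iff, Nat.leb_gt in Hl.
      pose proof (Hdom _ Hit) as (Hb & _ & _ & _ & _ & _ & Hc & Hcc & Hcn).
      simpl. apply in_prod; auto. apply in_seq. unfold w in Hl. lia. }
  assert (Hd : card (consec_diffs A) = length Dl) by reflexivity.
  rewrite Hd. fold n.
  pose proof (Nat.sqrt_spec m ltac:(lia)) as [Hs1 Hs2].
  fold t in Hs2.
  assert (Hs0 : (1 <= Nat.sqrt m)%nat).
  { destruct (Nat.sqrt m) eqn:E; [|lia]. simpl in Hs2. lia. }
  assert (HN : (m * length Dl * t <= 2 * n * t * t)%nat) by nia.
  assert (HN' : (m * length Dl <= 2 * n * t)%nat).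
  { apply (Nat.mul_le_mono_pos_r _ _ t). unfold t; lia. nia. }
  unfold t in HN'. nia.
Qed.
Theorem theorem2 :
  forall delta : R, 0 < delta <= 1 ->
  exists c : R, 0 < c /\
    forall A B : list R,
      Sorted Rlt A -> NoDup B -> B <> nil ->
      INR (card (consec_diffs A)) >= delta * INR (length A) ->
      INR (card (sumset A B)) >= c * INR (length A) * sqrt (INR (length B)).
Proof.
  intros delta Hd. exists (delta / 4). split. lra.
  intros A B HS HB Hne Hc.
  assert (Hm : (1 <= length B)%nat) by (destruct B; [congruence|simpl; lia]).
  pose proof (count_main A B HS HB Hm) as H.
  set (m := length B) in *. set (s := Nat.sqrt m) in *.
  set (d := card (consec_diffs A)) in *. set (n := card (sumset A B)) in *.
  set (k := length A) in *.
  apply le_INR in H. rewrite !mult_INR in H. simpl in H.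
  assert (Hss : (s * s <= m)%nat) by (apply Nat.sqrt_spec; lia).
  apply le_INR in Hss. rewrite mult_INR in Hss.
  assert (Hs0 : 0 <= INR s) by apply pos_INR.
  assert (Hsq : INR s <= sqrt (INR m)).
  { rewrite <- (sqrt_square (INR s)) by auto. apply sqrt_le_1; nra. }
  assert (Hm1 : 1 <= INR m) by (apply (le_INR 1); auto).
  assert (Hsm : sqrt (INR m) * sqrt (INR m) = INR m) by (apply sqrt_sqrt; lra).
  assert (Hsp : 0 < sqrt (INR m)) by (apply sqrt_lt_R0; lra).
  assert (Hn0 : 0 <= INR n) by apply pos_INR.
  assert (Hk0 : 0 <= INR k) by apply pos_INR.
  assert (H2 : delta * INR k * INR m <= 4 * INR n * sqrt (INR m)).
  { assert (INR m * INR d <= 4 * INR n * sqrt (INR m)).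
    { replace (4 * INR n * sqrt (INR m)) with (4 * INR n * INR s + 4 * INR n * (sqrt (INR m) - INR s)) by ring.
      assert (0 <= 4 * INR n * (sqrt (INR m) - INR s)) by (apply Rmult_le_pos; lra).
      replace (1+1+1+1) with 4 in H by ring. lra. }
    nra. }
  rewrite <- Hsm in H2.
  apply Rle_ge.
  apply (Rmult_le_reg_r (sqrt (INR m))); auto. nra.
Qed.
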